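(* Let $\sigma:\mathbf R\to\mathbf R$ be a non-decreasing $L$-Lipschitz function, let $A\in\mathbf R^{n\times k}$, $b\in\mathbf R^n$, let $h>0$ and let $\alpha\in(0,1)$. Define $\Xi:\mathbf R^k\to\mathbf R^k$ by $\Xi(x)=x-hA^\top\sigma(Ax+b)$, where $\sigma$ is applied componentwise. If \[h\,\|A\|^2\le 2\alpha/L,\] then $\Xi$ is $\alpha$-averaged.
   Context: $\mathbf R^k$ carries the Euclidean norm $\|\cdot\|$; $\|A\|$ denotes the spectral (operator) norm of $A$. An operator $T$ is non-expansive if $\|T(x)-T(y)\|\le\|x-y\|$ for all $x,y$. For $\alpha\in(0,1)$, an operator $\Xi:\mathbf R^k\to\mathbf R^k$ is called $\alpha$-averaged if there exists a non-expansive $T:\mathbf R^k\to\mathbf R^k$ with $\Xi=(1-\alpha)\mathrm{id}+\alpha T$. *)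

(* Defs.v *)
From HB Require Import structures.
From mathcomp Require Import all_boot all_order all_algebra.
From mathcomp Require Import all_classical all_reals.
Set Implicit Arguments. Unset Strict Implicit. Unset Printing Implicit Defensive.
Import Order.TTheory GRing.Theory Num.Theory.
Local Open Scope ring_scope.
Local Open Scope classical_set_scope.

Definition enorm (R : realType) (k : nat) (x : 'cV[R]_k) : R :=
  Num.sqrt (\sum_(i < k) x i 0 ^+ 2).

Definition opnorm (R : realType) (n k : nat) (A : 'M[R]_(n, k)) : R :=
  reals.sup [set enorm (A *m x) | x in [set x : 'cV[R]_k | enorm x <= 1]].

Definition nonexpansive (R : realType) (k : nat) (T : 'cV[R]_k -> 'cV[R]_k) :=
  forall x y, enorm (T x - T y) <= enorm (x - y).

Definition averaged (R : realType) (k : nat) (alpha : R)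
    (Xi : 'cV[R]_k -> 'cV[R]_k) :=
  exists T : 'cV[R]_k -> 'cV[R]_k,
    nonexpansive T /\ forall x, Xi x = (1 - alpha) *: x + alpha *: T x.

Definition lipschitz_with (R : realType) (L : R) (f : R -> R) :=
  forall x y, `|f x - f y| <= L * `|x - y|.

Definition nondecreasing_fun (R : realType) (f : R -> R) :=
  forall x y, x <= y -> f x <= f y.

Definition cmap (R : realType) (n : nat) (f : R -> R) (v : 'cV[R]_n) : 'cV[R]_n :=
  \col_i f (v i 0).

(* Main.v *)
Require Import Defs.
From HB Require Import structures.
From mathcomp Require Import all_boot all_order all_algebra.
From mathcomp Require Import all_classical all_reals.
From mathcomp Require Import ring lra.
Import Order.TTheory GRing.Theory Num.Theory.
Local Open Scope ring_scope.
Set Implicit Arguments. Unset Strict Implicit.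

Section Aux.
Variable R : realType.

Lemma CS_fun (m : nat) (f g : 'I_m -> R) :
  (\sum_i f i * g i) ^+ 2 <= (\sum_i f i ^+ 2) * (\sum_i g i ^+ 2).
Proof.
set a := \sum_i f i ^+ 2; set c := \sum_i g i ^+ 2; set p := \sum_i f i * g i.
have c0 : 0 <= c by apply: sumr_ge0 => i _; exact: sqr_ge0.
have H : 0 <= \sum_i (c * f i - p * g i) ^+ 2 by apply: sumr_ge0 => i _; exact: sqr_ge0.
have E : \sum_i (c * f i - p * g i) ^+ 2 =
   c ^+ 2 * a - 2 * c * p * p + p ^+ 2 * c.
  rewrite (eq_bigr (fun i => c ^+ 2 * f i ^+ 2 - (2 * c * p) * (f i * g i) + p ^+ 2 * g i ^+ 2)); last by move=> i _; ring.
  by rewrite big_split sumrB /= -!mulr_sumr.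
rewrite E in H.
have [cz|cpos] := eqVneq c 0.
  have g0 : forall i, g i = 0.
    move=> i; apply/eqP; rewrite -sqrf_eq0; apply/eqP.
    by apply: (psumr_eq0P (P := predT) (fun i _ => sqr_ge0 (g i)) cz).
  have -> : p = 0 by rewrite /p big1 // => i _; rewrite g0 mulr0.
  rewrite expr0n /= mulr_ge0 //; apply: sumr_ge0 => i _; exact: sqr_ge0.
have cp : 0 < c by rewrite lt_def cpos c0.
have : 0 <= c * (a * c - p ^+ 2) by rewrite -[_ * _]/(_) ; nra.
by rewrite pmulr_rge0 // subr_ge0.
Qed.


Definition dot (m : nat) (x y : 'cV[R]_m) := \sum_i x i 0 * y i 0.

Lemma dotC m (x y : 'cV[R]_m) : dot x y = dot y x.
Proof. by apply: eq_bigr => i _; rewrite mulrC. Qed.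

Lemma enorm_sqE m (x : 'cV[R]_m) : enorm x ^+ 2 = dot x x.
Proof.
rewrite /enorm sqr_sqrtr; last by apply: sumr_ge0 => i _; exact: sqr_ge0.
by apply: eq_bigr => i _; rewrite expr2.
Qed.

Lemma enorm_ge0 m (x : 'cV[R]_m) : 0 <= enorm x.
Proof. exact: sqrtr_ge0. Qed.

Lemma sq_le (a b : R) : 0 <= b -> a ^+ 2 <= b ^+ 2 -> `|a| <= b.
Proof.
move=> b0 H; rewrite -(ler_pXn2r (n:=2)) ?nnegrE ?normr_ge0 //.
by rewrite real_normK ?num_real.
Qed.

Lemma le_sq (a b : R) : 0 <= a -> a <= b -> a ^+ 2 <= b ^+ 2.
Proof. move=> a0 ab; rewrite ler_pXn2r ?nnegrE //; exact: le_trans ab. Qed.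

Lemma CS_dot m (x y : 'cV[R]_m) : dot x y <= enorm x * enorm y.
Proof.
have H : dot x y ^+ 2 <= (enorm x * enorm y) ^+ 2.
  rewrite exprMn !enorm_sqE.
  have := CS_fun (fun i => x i 0) (fun i => y i 0).
  have e1 : \sum_i x i 0 ^+ 2 = dot x x by apply: eq_bigr => i _; rewrite expr2.
  have e2 : \sum_i y i 0 ^+ 2 = dot y y by apply: eq_bigr => i _; rewrite expr2.
  by rewrite e1 e2.
apply: (le_trans (ler_norm _)); apply: sq_le => //.
by rewrite mulr_ge0 ?enorm_ge0.
Qed.

Lemma enormZ m a (x : 'cV[R]_m) : enorm (a *: x) = `|a| * enorm x.
Proof.
rewrite /enorm -sqrtr_sqr -sqrtrM ?sqr_ge0 // mulr_sumr.
by congr Num.sqrt; apply: eq_bigr => i _; rewrite mxE exprMn.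
Qed.

Lemma enorm_eq0 m (x : 'cV[R]_m) : enorm x = 0 -> x = 0.
Proof.
move=> /eqP; rewrite sqrtr_eq0 => H.
have H0 : \sum_i x i 0 ^+ 2 = 0.
  by apply/eqP; rewrite eq_le H sumr_ge0 // => i _; exact: sqr_ge0.
apply/matrixP => i j; rewrite ord1 mxE; apply/eqP; rewrite -sqrf_eq0; apply/eqP.
exact: (psumr_eq0P (P := predT) (fun i _ => sqr_ge0 (x i 0)) H0).
Qed.

Lemma dot_tr n m (A : 'M[R]_(n, m)) s d : dot (A^T *m s) d = dot s (A *m d).
Proof.
rewrite /dot.
under eq_bigr => j _ do rewrite mxE mulr_suml.
rewrite exchange_big /=; apply: eq_bigr => i _.
rewrite mxE mulr_sumr; apply: eq_bigr => j _; rewrite !mxE; ring.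
Qed.

Lemma opnorm_has_sup n m (A : 'M[R]_(n, m)) :
  has_sup [set enorm (A *m x) | x in [set x : 'cV[R]_m | enorm x <= 1]].
Proof.
split.
  exists (enorm (A *m 0)), 0 => //=.
  by rewrite /enorm big1 ?sqrtr0 // => i _; rewrite mxE expr0n.
exists (Num.sqrt (\sum_i (\sum_j `|A i j|) ^+ 2)).
move=> _ [x /= Hx <-].
apply: ler_wsqrtr; apply: ler_sum => i _.
have xj : forall j, `|x j 0| <= 1.
  move=> j.
  have : x j 0 ^+ 2 <= 1.
    have : enorm x ^+ 2 <= 1 by rewrite -[X in _ <= X](expr1n R 2); apply: le_sq; rewrite ?enorm_ge0.
    rewrite /enorm sqr_sqrtr; last by apply: sumr_ge0 => l _; exact: sqr_ge0.
    apply: le_trans.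
    rewrite (bigD1 j) //= lerDl; apply: sumr_ge0 => l _; exact: sqr_ge0.
  by move=> H; apply: sq_le; rewrite ?expr1n.
rewrite -[X in X <= _]real_normK ?num_real //; apply: le_sq; first exact: normr_ge0.
rewrite mxE; apply: (le_trans (ler_norm_sum _ _ _)); apply: ler_sum => j _.
by rewrite normrM ler_piMr.
Qed.

Lemma opnorm_ge0 n m (A : 'M[R]_(n, m)) : 0 <= opnorm A.
Proof.
apply: le_trans (sup_upper_bound (opnorm_has_sup A) _).
  exact: (enorm_ge0 (A *m 0)).
exists 0 => //=.
by rewrite /enorm big1 ?sqrtr0 // => i _; rewrite mxE expr0n.
Qed.

Lemma opnorm_bound n m (A : 'M[R]_(n, m)) x : enorm (A *m x) <= opnorm A * enorm x.
Proof.
have [/enorm_eq0 ->|nz] := eqVneq (enorm x) 0.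
  by rewrite mulmx0 /enorm !big1 ?sqrtr0 ?mulr0 // => i _; rewrite mxE expr0n.
have xp : 0 < enorm x by rewrite lt_def nz enorm_ge0.
rewrite -ler_pdivrMr //.
have -> : enorm (A *m x) / enorm x = enorm (A *m ((enorm x)^-1 *: x)).
  by rewrite -scalemxAr enormZ ger0_norm ?invr_ge0 ?enorm_ge0 // mulrC.
apply: sup_upper_bound; first exact: opnorm_has_sup.
exists ((enorm x)^-1 *: x) => //=.
by rewrite enormZ ger0_norm ?invr_ge0 ?enorm_ge0 // mulVf.
Qed.


Lemma mono_lip (sigma : R -> R) L (a b : R) : 0 < L -> nondecreasing_fun sigma ->
  lipschitz_with L sigma ->
  (sigma a - sigma b) ^+ 2 <= L * ((sigma a - sigma b) * (a - b)).
Proof.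
move=> L0 mono lip; have := lip a b.
have [ab|ba] := leP a b.
  have h1 := mono _ _ ab.
  rewrite (ler0_norm (x := sigma a - sigma b)) ?subr_le0 //.
  rewrite (ler0_norm (x := a - b)) ?subr_le0 // => h2.
  nra.
have h1 := mono _ _ (ltW ba).
rewrite (ger0_norm (x := sigma a - sigma b)) ?subr_ge0 //.
rewrite (ger0_norm (x := a - b)) ?subr_ge0 ?(ltW ba) // => h2.
nra.
Qed.

Lemma opT n m (A : 'M[R]_(n, m)) s : enorm (A^T *m s) <= opnorm A * enorm s.
Proof.
set w := A^T *m s.
have H : enorm w ^+ 2 <= enorm w * (opnorm A * enorm s).
  rewrite enorm_sqE /w dot_tr.
  apply: (le_trans (CS_dot _ _)).
  have b1 := opnorm_bound A w; have b2 := enorm_ge0 s; nra.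
have [ew0|nz] := eqVneq (enorm w) 0.
  by rewrite ew0 mulr_ge0 ?opnorm_ge0 ?enorm_ge0.
have ep : 0 < enorm w by rewrite lt_def nz enorm_ge0.
by rewrite expr2 ler_pM2l in H.
Qed.

Lemma dot_expand m (d w : 'cV[R]_m) c :
  dot (d - c *: w) (d - c *: w) = dot d d - 2 * c * dot d w + c ^+ 2 * dot w w.
Proof.
rewrite /dot (eq_bigr (fun i => d i 0 * d i 0 - (2 * c) * (d i 0 * w i 0) + c ^+ 2 * (w i 0 * w i 0))); last by move=> i _; rewrite !mxE; ring.
by rewrite big_split sumrB /= -!mulr_sumr.
Qed.

Lemma diff_lemma m (x y w1 w2 : 'cV[R]_m) c :
  (x - c *: w1) - (y - c *: w2) = (x - y) - c *: (w1 - w2).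
Proof. apply/matrixP => i j; rewrite !mxE; ring. Qed.

End Aux.

Theorem mainTheorem3 (R : realType) (n k : nat) (sigma : R -> R) (L : R)
  (A : 'M[R]_(n, k)) (b : 'cV[R]_n) (h alpha : R) :
  0 < L -> nondecreasing_fun sigma -> lipschitz_with L sigma ->
  0 < h -> 0 < alpha -> alpha < 1 ->
  h * opnorm A ^+ 2 <= 2 * alpha / L ->
  averaged alpha (fun x : 'cV[R]_k => x - h *: (A^T *m cmap sigma (A *m x + b))).
Proof.
move=> L0 mono lip h0 a0 a1 hyp.
set c := h / alpha.
exists (fun x => x - c *: (A^T *m cmap sigma (A *m x + b))); split; last first.
  move=> x; rewrite scalerBr scalerA /c mulrC divfK ?gt_eqF //.
  by rewrite scalerBl scale1r addrA subrK.
move=> x y; rewrite diff_lemma -mulmxBr.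
set s := cmap sigma (A *m x + b) - _; set d := x - y.
set w := A^T *m s.
set q := opnorm A ^+ 2.
apply: (le_trans (ler_norm _)); apply: sq_le; first exact: enorm_ge0.
rewrite !enorm_sqE dot_expand.
set D := dot d d.
have Ad : A *m d = (A *m x + b) - (A *m y + b).
  by rewrite /d mulmxBr opprD addrACA subrr addr0.
have P1 : dot d w = dot s ((A *m x + b) - (A *m y + b)).
  by rewrite dotC /w dot_tr Ad.
set P := dot s _ in P1.
have SP : dot s s <= L * P.
  rewrite /P /dot mulr_sumr; apply: ler_sum => i _.
  rewrite /s !mxE -expr2; exact: mono_lip.
have WS : dot w w <= q * dot s s.
  rewrite -!enorm_sqE /q -exprMn; apply: le_sq; first exact: enorm_ge0.
  exact: opT.
have hq : h * q * L <= 2 * alpha by rewrite -ler_pdivlMr.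
have S0 : 0 <= dot s s by rewrite -enorm_sqE sqr_ge0.
have q0 : 0 <= q by rewrite /q sqr_ge0.
have c0 : 0 < c by rewrite /c divr_gt0.
have cq : c * q * L <= 2.
  have -> : c * q * L = h * q * L / alpha by rewrite /c; ring.
  by rewrite ler_pdivrMr.
have cqS : c * q * dot s s <= 2 * P.
  have : c * q * dot s s * L <= 2 * P * L by nra.
  by rewrite ler_pM2r.
rewrite P1.
have : c ^+ 2 * dot w w <= c ^+ 2 * (q * dot s s) by rewrite ler_wpM2l ?sqr_ge0.
nra.
Qed.
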